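(* Let $a,b>0$ and $1\le k<m\le n-1$ be integers with $a^m\neq b^k$. Then there exists a finite set $\mathcal{F}=\mathcal{F}_{a,b,k,m}\subset\mathbb{R}$, depending only on $a,b,k,m$, such that the following holds: if $x_1,\dots,x_n$ are nonnegative and $y_1,\dots,y_n$ are positive real numbers such that $$x_I+y_I=2a\quad\text{and}\quad x_J+y_J=2b$$ whenever $I,J\subset\{1,\dots,n\}$, $|I|=k$ and $|J|=m$, then $y_1,\dots,y_n\in\mathcal{F}$.
   Context: For real numbers $x_1,\dots,x_n$ and $I\subset\{1,\dots,n\}$, $x_I:=\prod_{\iota\in I}x_\iota$ (with $x_\emptyset=1$); $|I|$ is the cardinality of $I$. *)

(* Defs.v *)
From mathcomp Require Import all_boot all_order all_algebra.
From mathcomp Require Export reals.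
Set Implicit Arguments. Unset Strict Implicit. Unset Printing Implicit Defensive.
Import Order.TTheory GRing.Theory Num.Theory.
Local Open Scope ring_scope.

Definition prodI (R : realType) (n : nat) (x : 'I_n -> R) (I : {set 'I_n}) : R :=
  \prod_(i in I) x i.

(* Main.v *)
Require Import Defs.
From mathcomp Require Import all_boot all_order all_algebra.
From mathcomp Require Import reals.
From Stdlib Require Import Classical_Prop Classical_Pred_Type.
From mathcomp Require Import zify ring lra.
Import Order.TTheory GRing.Theory Num.Theory.
Set Implicit Arguments. Unset Strict Implicit.
Local Open Scope ring_scope.

Lemma ex_sub (T : finType) (A : {set T}) h : (h <= #|A|)%N ->
  exists K : {set T}, K \subset A /\ #|K| = h.
Proof.
elim: h => [|h IH] hA; first by exists set0; rewrite sub0set cards0.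
have [K [KA cK]] := IH (ltnW hA).
have : (0 < #|A :\: K|)%N by rewrite cardsD (setIidPr KA) cK subn_gt0.
case/card_gt0P => z; rewrite inE => /andP [zK zA].
exists (z |: K); split; first by rewrite subUset sub1set zA KA.
by rewrite cardsU1 zK cK.
Qed.

Lemma roots_fin (R : idomainType) (p : {poly R}) : p != 0 ->
  exists s : seq R, forall z, root p z -> z \in s.
Proof.
move: {2}(size p) (leqnn (size p)) => N; elim: N p => [|N IH] p hs p0.
  by move: p0; rewrite -size_poly_eq0; move: hs; rewrite leqn0 => ->.
case: (classic (exists r, root p r)) => [[r rr]|nr]; last first.
  by exists [::] => z rz; exfalso; apply: nr; exists z.
case/factor_theorem: rr => q pq.
have q0 : q != 0 by apply: contraNneq p0 => q0; rewrite pq q0 mul0r.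
have : (size q <= N)%N.
  move: hs; rewrite pq size_mul // ?polyXsubC_eq0 // size_XsubC addn2 /=.
  by [].
move/(IH q)/(_ q0) => [s hsq]; exists (r :: s) => z.
rewrite pq rootM root_XsubC in_cons => /orP [/hsq ->|/eqP ->]; last by rewrite eqxx.
by rewrite orbT.
Qed.

Lemma prodIU1 (R : realType) n (g : 'I_n -> R) (i : 'I_n) (K : {set 'I_n}) : i \notin K ->
  prodI g (i |: K) = g i * prodI g K.
Proof. by move=> iK; rewrite /prodI big_setU1. Qed.

Lemma prodI_const (R : realType) n (g : 'I_n -> R) (K : {set 'I_n}) s :
  (forall l, l \in K -> g l = s) -> prodI g K = s ^+ #|K|.
Proof. by move=> h; rewrite /prodI -prodr_const; apply: eq_bigr. Qed.

Lemma prodI_neq0 (R : realType) n (g : 'I_n -> R) (K : {set 'I_n}) :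
  (forall l, l \in K -> g l != 0) -> prodI g K != 0.
Proof. by move=> h; apply/prodf_neq0. Qed.

Lemma prodI_gt0 (R : realType) n (g : 'I_n -> R) (K : {set 'I_n}) :
  (forall l, 0 < g l) -> 0 < prodI g K.
Proof. by move=> h; apply: prodr_gt0 => l _. Qed.

Lemma const_on (R : realType) n (g : 'I_n -> R) (L : {set 'I_n}) h (c : R) :
 (0 < h)%N -> (h < #|L|)%N -> (forall l, l \in L -> g l != 0) ->
 (forall K : {set 'I_n}, K \subset L -> #|K| = h -> prodI g K = c) ->
 forall l l', l \in L -> l' \in L -> g l = g l'.
Proof.
move=> h0 hL gn hK l l' lL l'L.
have [->//|ll'] := eqVneq l l'.
have : (h.-1 <= #|L :\: [set l; l']|)%N.
  rewrite cardsD (setIidPr _); last by rewrite subUset !sub1set lL l'L.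
  rewrite cards2 ll' /=; move: hL h0; clear; case: h => // h hL' _; rewrite -pred_Sn -(leq_add2r 2) subnK ?addn2 //; exact: (leq_trans _ hL').
case/ex_sub => K0 [K0s cK0].
have lK0 : l \notin K0.
  by apply/negP => /(subsetP K0s); rewrite !inE eqxx.
have l'K0 : l' \notin K0.
  by apply/negP => /(subsetP K0s); rewrite !inE eqxx orbT.
have K0L : K0 \subset L by apply: subset_trans K0s (subsetDl _ _).
have e1 := hK (l |: K0); have e2 := hK (l' |: K0).
rewrite prodIU1 // in e1; rewrite prodIU1 // in e2.
have p0 : prodI g K0 != 0 by apply: prodI_neq0 => z /(subsetP K0L) /gn.
apply: (mulIf p0); rewrite e1 ?e2 //.
- by rewrite subUset sub1set l'L.
- by rewrite cardsU1 l'K0 cK0 add1n prednK.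
- by rewrite subUset sub1set lL.
- by rewrite cardsU1 lK0 cK0 add1n prednK.
Qed.

Lemma sub_XX (R : comPzRingType) (c y : R) m :
  (c - y) ^+ m = c ^+ m - y * \sum_(i < m) c ^+ (m.-1 - i) * (c - y) ^+ i.
Proof.
have := subrXX c (c - y) m.
have -> : c - (c - y) = y by ring.
move=> <-; ring.
Qed.

Lemma Rpoly_neq0 (R : realType) (a b : R) k m : 0 < a -> (0 < k)%N -> (k < m)%N ->
  ((2*a)%:P - 'X^k) ^+ m - ((2*b)%:P - 'X^m) ^+ k != 0 :> {poly R}.
Proof.
move=> a0 k0 km; set c := 2 * a; set d := 2 * b.
have c0 : 0 < c by rewrite /c mulr_gt0.
rewrite !sub_XX.
set S1 := \sum_(i < m) _; set S2 := \sum_(i < k) _.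
have eX : 'X^m = 'X^k * 'X^(m - k) :> {poly R} by rewrite -exprD subnKC // ltnW.
rewrite eX.
set T := S1 - 'X^(m-k) * S2.
have -> : c%:P ^+ m - 'X^k * S1 - (d%:P ^+ k - 'X^k * 'X^(m - k) * S2)
   = (c ^+ m - d ^+ k)%:P - 'X^k * T by rewrite /T rmorphB !rmorphXn; ring.
apply/negP => /eqP h0.
have hc : c ^+ m - d ^+ k = 0.
  by have := congr1 (fun p => p.[0]) h0; rewrite /= !hornerE expr0n /= eqn0Ngt k0 mul0r subr0.
move: h0; rewrite hc polyC0 sub0r => /eqP; rewrite oppr_eq0 mulf_eq0 expf_eq0 polyX_eq0 andbF /=.
move/eqP => /(congr1 (fun p => p.[0])). rewrite /T. rewrite /S1 !hornerE horner_sum expr0n eqn0Ngt subn_gt0 km mul0r subr0.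
rewrite (eq_bigr (fun _ => c ^+ m.-1)); last first.
  move=> i _; rewrite !hornerE expr0n eqn0Ngt k0 /= subr0 -exprD subnK //.
  by rewrite -ltnS prednK ?ltn_ord // (leq_trans _ km).
rewrite sumr_const card_ord => /eqP; rewrite mulrn_eq0 expf_eq0 (gt_eqF c0) andbF orbF.
by rewrite eqn0Ngt (leq_trans _ km).
Qed.

Lemma nroot (R : rcfType) (t : R) Q : 0 <= t -> (0 < Q)%N ->
  exists z, 0 <= z /\ z ^+ Q = t.
Proof.
move=> t0 Q0.
have h1 : (0:R) <= 1 + t by rewrite addr_ge0.
have h2 : ('X^Q - t%:P).[0] <= 0 <= ('X^Q - t%:P).[1 + t].
  rewrite !hornerE expr0n eqn0Ngt Q0 /= sub0r oppr_le0 t0 /= subr_ge0.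
  by apply: le_trans (ler_eXnr _ _) => //; [rewrite lerDr | rewrite lerDl].
have [z /andP [z0 _] rz] := @poly_ivt R ('X^Q - t%:P) 0 (1 + t) h1 h2.
by exists z; split => //; move: rz; rewrite /root !hornerE subr_eq0 => /eqP.
Qed.

Definition Gp (R : realType) (a b : R) m P : {poly R} :=
  (b / a)%:P * (1 + 'X^(m.-1 - P)) ^+ P * (1 + 'X^P) ^+ (m.-1 - P)
  - ((2 * a) ^+ m.-1)%:P * 'X^(P * (m.-1 - P)).

Definition fP (R : realType) (a : R) m P (z : R) : R :=
  2 * a * z ^+ (m.-1 - P) / (1 + z ^+ (m.-1 - P)).

Lemma Gp_neq0 (R : realType) (a b : R) m P : 0 < a -> 0 < b -> (0 < P)%N -> (P < m.-1)%N ->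
  Gp a b m P != 0.
Proof.
move=> a0 b0 P0 Pm; apply/negP => /eqP /(congr1 (fun p => p.[0])).
rewrite /Gp !hornerE /= !expr0n /= !eqn0Ngt P0 subn_gt0 Pm muln_gt0 P0 subn_gt0 Pm /=.
rewrite !addr0 !expr1n !mulr1 mulr0 subr0 => /eqP.
by rewrite mulf_eq0 invr_eq0 !gt_eqF.
Qed.

Lemma stepd (R : realType) (a b u v u' v' : R) m P :
  0 < a -> 0 < b -> a ^+ m != b -> (1 < m)%N ->
  0 <= u -> 0 < v -> 0 <= u' -> 0 < v' -> u + v = 2 * a -> u' + v' = 2 * a ->
  (P <= m.-1)%N ->
  u ^+ P * u' ^+ (m.-1 - P) = b / a -> v ^+ P * v' ^+ (m.-1 - P) = b / a ->
  [/\ (0 < P)%N, (P < m.-1)%N & exists z, root (Gp a b m P) z /\ v = fP a m P z].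
Proof.
move=> a0 b0 abm m1 u0 v0 u'0 v'0 uv uv' Pm hu hv.
set Q := (m.-1 - P)%N in hu hv *.
have ba0 : 0 < b / a by rewrite divr_gt0.
have eA : forall w w' : R, 0 <= w -> w + w' = 2 * a -> w ^+ m.-1 = b / a -> w' = w -> a ^+ m = b.
  move=> w w' w0 ww hw e; subst w'.
  have wa : w = a by lra.
  by move: hw; rewrite wa => /(congr1 (fun z => z * a)); rewrite divfK ?gt_eqF // -exprSr prednK // ltnW.
have m10 : (0 < m.-1)%N by rewrite -subn1 subn_gt0.
have P0 : (0 < P)%N.
  rewrite lt0n; apply/negP => /eqP P0; move: hu hv; rewrite /Q P0 !expr0 !mul1r subn0 => hu hv.
  have e : u' = v'.
    by apply/eqP; rewrite -(@eqrXn2 _ m.-1 _ _ m10) ?hu ?hv // ltW.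
  by move/eqP: abm; apply; apply: (eA v' u') => //; [rewrite ltW | lra].
have Q0 : (0 < Q)%N.
  rewrite lt0n; apply/negP => /eqP Q0; move: hu hv; rewrite Q0 !expr0 !mulr1 => hu hv.
  have PmE : P = m.-1 by move: Q0; rewrite /Q; lia.
  rewrite PmE in hu hv.
  have e : u = v.
    by apply/eqP; rewrite -(@eqrXn2 _ m.-1 _ _ m10) ?hu ?hv // ltW.
  by move/eqP: abm; apply; apply: (eA v u) => //; [rewrite ltW | lra].
have PQ : (P < m.-1)%N by move: Q0; rewrite /Q; lia.
split => //.
have upos : 0 < u.
  rewrite lt_def u0 andbT; apply/negP => /eqP u00; move: hu; rewrite u00 expr0n eqn0Ngt P0 /= mul0r.
  by move=> h; move: ba0; rewrite -h ltxx.
have [z [z0 hz]] := nroot (divr_ge0 (ltW v0) (ltW upos)) Q0.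
have ev : v = z ^+ Q * u by rewrite hz divfK ?gt_eqF.
have e1 : u * (1 + z ^+ Q) = 2 * a by rewrite -uv ev; ring.
have eup : u' = z ^+ P * v'.
  apply/eqP; rewrite -(@eqrXn2 _ Q _ _ Q0) //; last by rewrite mulr_ge0 ?exprn_ge0 // ltW.
  have : u ^+ P * u' ^+ Q = u ^+ P * (z ^+ P * v') ^+ Q.
    by rewrite hu -hv ev !exprMn -!exprM mulnC; ring.
  by move/(mulfI (expf_neq0 P (lt0r_neq0 upos))) => ->.
have e2 : v' * (1 + z ^+ P) = 2 * a by rewrite -uv' eup; ring.
exists z; split.
  rewrite /root /Gp !hornerE -/Q -hu.
  have -> : (2 * a) ^+ m.-1 = (2 * a) ^+ P * (2 * a) ^+ Q by rewrite -exprD subnKC.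
  rewrite -{1}e1 -e2 eup exprM !exprMn; apply/eqP; ring.
rewrite /fP -/Q ev -e1; field.
by rewrite gt_eqF // ltr_pwDl // exprn_ge0.
Qed.


Lemma fin_union (T : eqType) (S : nat -> T -> Prop) N :
  (forall P, (P < N)%N -> exists s : seq T, forall v, S P v -> v \in s) ->
  exists s : seq T, forall P v, (P < N)%N -> S P v -> v \in s.
Proof.
elim: N => [|N IH] h; first by exists ([::] : seq T).
have [s1 h1] := IH (fun P hP => h P (ltnW hP)).
have [s2 h2] := h N (ltnSn N).
exists (s1 ++ s2) => P v; rewrite ltnS leq_eqVlt => /orP [/eqP ->|PN] hv.
  by rewrite mem_cat h2 ?orbT.
by rewrite mem_cat (h1 P)...
Qed.

Section Main.
Variables (R : realType) (a b : R) (k m n : nat) (x y : 'I_n -> R).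
Hypotheses (a0 : 0 < a) (b0 : 0 < b) (k1 : (1 <= k)%N) (km : (k < m)%N)
  (abm : a ^+ m != b ^+ k) (hn : (m <= n.-1)%N)
  (hx : forall i, 0 <= x i) (hy : forall i, 0 < y i)
  (hI : forall I : {set 'I_n}, #|I| = k -> prodI x I + prodI y I = 2 * a)
  (hJ : forall J : {set 'I_n}, #|J| = m -> prodI x J + prodI y J = 2 * b).

Lemma mn : (m < n)%N.
Proof. by move: hn km; case: n => [|n'] /=; lia. Qed.

Lemma hIK i (K : {set 'I_n}) : i \notin K -> #|K|.+1 = k ->
  x i * prodI x K + y i * prodI y K = 2 * a.
Proof. by move=> iK cK; rewrite -!prodIU1 //; apply: hI; rewrite cardsU1 iK. Qed.

Lemma hJK i (K : {set 'I_n}) : i \notin K -> #|K|.+1 = m ->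
  x i * prodI x K + y i * prodI y K = 2 * b.
Proof. by move=> iK cK; rewrite -!prodIU1 //; apply: hJ; rewrite cardsU1 iK. Qed.

Lemma cardO (i j : 'I_n) : i != j -> #|~: [set i; j]| = (n - 2)%N.
Proof.
move=> ij; have := cardsC [set i; j]; rewrite cards2 ij card_ord => e.
by move: e; generalize #|~: [set i; j]| => c e; lia.
Qed.

Lemma exL (i j : 'I_n) : i != j ->
  exists L : {set 'I_n}, L \subset ~: [set i; j] /\ #|L| = m.-1.
Proof.
move=> ij; apply: ex_sub; rewrite cardO //; have := mn; move: km; clear; lia.
Qed.

Lemma L_const i : (forall j, y j = y i) ->
  root (((2*a)%:P - 'X^k) ^+ m - ((2*b)%:P - 'X^m) ^+ k) (y i).
Proof.
set t := y i => yt.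
have yK : forall K : {set 'I_n}, prodI y K = t ^+ #|K|.
  by move=> K; apply: prodI_const => l _; apply: yt.
have m0 : (0 < m)%N by apply: leq_trans k1 (ltnW km).
have [s [hs1 hs2]] : exists s, s ^+ k + t ^+ k = 2 * a /\ s ^+ m + t ^+ m = 2 * b.
  case: (classic (exists l, x l = 0)) => [[l xl0]|nx].
  - exists 0.
    have sub : forall h, (0 < h)%N -> (h <= n)%N ->
        exists I : {set 'I_n}, l \in I /\ #|I| = h.
      move=> h h0 hn'.
      have [K [Ks cK]] : exists K : {set 'I_n}, K \subset ~: [set l] /\ #|K| = h.-1.
        apply: ex_sub; have := cardsC [set l]; rewrite cards1 card_ord => e.
        by rewrite -(leq_add2l 1) e add1n prednK.
      exists (l |: K); split; first by rewrite setU11.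
      have lK : l \notin K by apply/negP => /(subsetP Ks); rewrite !inE eqxx.
      by rewrite cardsU1 lK cK add1n prednK.
    have [I [lI cI]] := sub k k1 (ltnW (leq_trans km (ltnW mn))).
    have [J [lJ cJ]] := sub m m0 (ltnW mn).
    have p0 : forall K : {set 'I_n}, l \in K -> prodI x K = 0.
      by move=> K lK; apply/eqP; rewrite /prodI; apply/prodf_eq0; exists l => //; rewrite xl0.
    rewrite !expr0n !eqn0Ngt k1 m0 !add0r.
    split.
      by move: (hI cI); rewrite p0 // add0r yK cI.
    by move: (hJ cJ); rewrite p0 // add0r yK cJ.
  - have xn : forall l, x l != 0 by move=> l; apply/eqP => h; apply: nx; exists l.
    have xc : forall l, x l = x i.
      move=> l; apply: (@const_on _ _ x [set: 'I_n] k (2 * a - t ^+ k)); rewrite ?inE //.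
      + by rewrite cardsT card_ord (leq_trans km (ltnW mn)).
      + by move=> K _ cK; rewrite -(hI cK) yK cK addrK.
    exists (x i).
    have [I [_ cI]] : exists I : {set 'I_n}, I \subset [set: 'I_n] /\ #|I| = k.
      by apply: ex_sub; rewrite cardsT card_ord (ltnW (leq_trans km (ltnW mn))).
    have [J [_ cJ]] : exists I : {set 'I_n}, I \subset [set: 'I_n] /\ #|I| = m.
      by apply: ex_sub; rewrite cardsT card_ord (ltnW mn).
    have yc : forall l, l \in I -> y l = t by move=> l' _; rewrite yt.
    split.
      by rewrite -(hI cI) (prodI_const (g := x) (s := x i)) ?yK ?cI // => l' _; apply: xc.
    by rewrite -(hJ cJ) (prodI_const (g := x) (s := x i)) ?yK ?cJ // => l' _; apply: xc.
rewrite /root !hornerE -hs1 -hs2 !addrK -!exprM mulnC subrr.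
by [].
Qed.

Lemma notin_sub (i : 'I_n) (A B : {set 'I_n}) : A \subset B -> i \notin B -> i \notin A.
Proof. by move=> AB; apply: contra; apply: (subsetP AB). Qed.

Lemma L_k2 : (1 < k)%N -> forall i j, y i != y j -> False.
Proof.
move=> k2 i j yij.
have ij : i != j by apply: contraNneq yij => ->.
have [L [LO cL]] := exL ij.
have iL : i \notin L by apply: (notin_sub LO); rewrite !inE eqxx.
have jL : j \notin L by apply: (notin_sub LO); rewrite !inE eqxx orbT.
have m0 : (0 < m)%N by apply: leq_trans k1 (ltnW km).
set D := x i - x j; set E := y j - y i.
have E0 : E != 0 by rewrite subr_eq0 eq_sym.
have pairK : forall K : {set 'I_n}, K \subset L -> (#|K|.+1 = k \/ #|K|.+1 = m) ->
    prodI x K * D = prodI y K * E.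
  move=> K KL hK.
  have iK := notin_sub KL iL; have jK := notin_sub KL jL.
  have e : x i * prodI x K + y i * prodI y K = x j * prodI x K + y j * prodI y K.
    by case: hK => hK; [rewrite hIK // hIK | rewrite hJK // hJK].
  rewrite /D /E; lra.
have cL1 : #|L|.+1 = m by rewrite cL prednK.
have yL0 : forall K : {set 'I_n}, 0 < prodI y K by move=> K; apply: prodI_gt0.
have xL0 : prodI x L != 0.
  apply/negP => /eqP h; have := pairK L (subxx _) (or_intror cL1).
  rewrite h mul0r => /esym /eqP; rewrite mulf_eq0 (gt_eqF (yL0 L)) /=.
  by apply/negP.
have xl0 : forall l, l \in L -> x l != 0.
  by move: xL0; rewrite /prodI => /prodf_neq0.
have D0 : D != 0.
  apply/negP => /eqP h; have := pairK L (subxx _) (or_intror cL1).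
  rewrite h mulr0 => /eqP; rewrite eq_sym mulf_eq0 (gt_eqF (yL0 L)) /=.
  by apply/negP.
set c := x i + y i * D / E.
have hxK : forall K : {set 'I_n}, K \subset L -> #|K| = k.-1 -> prodI x K * c = 2 * a.
  move=> K KL cK.
  have cK1 : #|K|.+1 = k by rewrite cK prednK.
  have e := hIK (notin_sub KL iL) cK1.
  have yKe : prodI y K = prodI x K * D / E.
    by rewrite (pairK K KL (or_introl cK1)) mulfK.
  by rewrite -e yKe /c; field.
have c0 : c != 0.
  have [K0 [K0L cK0]] : exists K : {set 'I_n}, K \subset L /\ #|K| = k.-1.
    by apply: ex_sub; rewrite cL; move: km k1; clear; lia.
  apply/negP => /eqP h; move: (hxK K0 K0L cK0); rewrite h mulr0 => /eqP.
  by rewrite eq_sym mulf_eq0 pnatr_eq0 (gt_eqF a0).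
have hxc : forall l l', l \in L -> l' \in L -> x l = x l'.
  apply: (@const_on _ _ x L k.-1 (2 * a / c)) => //.
  - by move: k2; clear; lia.
  - by rewrite cL; move: km k2; clear; lia.
  - by move=> K KL cK; rewrite -(hxK K KL cK) mulfK.
have hyc : forall l l', l \in L -> l' \in L -> y l = y l'.
  apply: (@const_on _ _ y L k.-1 (2 * a / c * D / E)) => //.
  - by move: k2; clear; lia.
  - by rewrite cL; move: km k2; clear; lia.
  - by move=> l _; apply: lt0r_neq0.
  - move=> K KL cK; rewrite -(hxK K KL cK) mulfK //.
    have cK1 : #|K|.+1 = k by rewrite cK prednK.
    by rewrite (pairK K KL (or_introl cK1)) mulfK.
have [l0 l0L] : exists l0, l0 \in L.
  by apply/card_gt0P; rewrite cL; move: km k1; clear; lia.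
set s := x l0; set t := y l0.
have s0 : 0 < s by rewrite lt0r xl0 ?hx.
have t0 : 0 < t by apply: hy.
have xK : forall K : {set 'I_n}, K \subset L -> prodI x K = s ^+ #|K|.
  by move=> K KL; apply: prodI_const => l lK; apply: hxc => //; apply: (subsetP KL).
have yK : forall K : {set 'I_n}, K \subset L -> prodI y K = t ^+ #|K|.
  by move=> K KL; apply: prodI_const => l lK; apply: hyc => //; apply: (subsetP KL).
have [K0 [K0L cK0]] : exists K : {set 'I_n}, K \subset L /\ #|K| = k.-1.
  by apply: ex_sub; rewrite cL; move: km k1; clear; lia.
have [I0 [I0L cI0]] : exists K : {set 'I_n}, K \subset L /\ #|K| = k.
  by apply: ex_sub; rewrite cL; move: km k1; clear; lia.
have cK1 : #|K0|.+1 = k by rewrite cK0 prednK.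
have e1 := pairK K0 K0L (or_introl cK1); rewrite xK // yK // cK0 in e1.
have e2 := pairK L (subxx _) (or_intror cL1); rewrite xK // yK // cL in e2.
have e3 := hI cI0; rewrite xK // yK // cI0 in e3.
have e4 := hIK (notin_sub K0L iL) cK1; rewrite xK // yK // cK0 in e4.
have e5 := hJK iL cL1; rewrite xK // yK // cL in e5.
have hmk : m.-1 = (k.-1 + (m - k))%N by move: km k1; clear; lia.
have mk0 : (0 < m - k)%N by rewrite subn_gt0.
have st : s = t.
  have h1 : s ^+ k.-1 * t ^+ m.-1 = s ^+ m.-1 * t ^+ k.-1.
    apply: (mulfI D0).
    have -> : D * (s ^+ k.-1 * t ^+ m.-1) = t ^+ m.-1 * (s ^+ k.-1 * D) by ring.
    have -> : D * (s ^+ m.-1 * t ^+ k.-1) = t ^+ k.-1 * (s ^+ m.-1 * D) by ring.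
    by rewrite e1 e2; ring.
  move: h1; rewrite hmk !exprD.
  have -> : s ^+ k.-1 * (t ^+ k.-1 * t ^+ (m - k)) = (s ^+ k.-1 * t ^+ k.-1) * t ^+ (m - k) by ring.
  have -> : s ^+ k.-1 * s ^+ (m - k) * t ^+ k.-1 = (s ^+ k.-1 * t ^+ k.-1) * s ^+ (m - k) by ring.
  move/(mulfI (mulf_neq0 (expf_neq0 _ (lt0r_neq0 s0)) (expf_neq0 _ (lt0r_neq0 t0)))).
  by move/eqP; rewrite eqrXn2 ?ltW // => /eqP ->.
rewrite -st in e1 e2 e3 e4 e5.
have DE : D = E by apply: (mulfI (expf_neq0 k.-1 (lt0r_neq0 s0))).
have sk : s ^+ k = a by lra.
have skS : s ^+ k = s ^+ k.-1 * s by rewrite -exprSr prednK.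
have smS : s ^+ m = s ^+ m.-1 * s by rewrite -exprSr prednK.
have hxy : x i + y i = 2 * s.
  apply: (mulfI (expf_neq0 k.-1 (lt0r_neq0 s0))).
  by rewrite mulrDr (mulrC _ (x i)) (mulrC _ (y i)) e4 -sk skS; ring.
have sm : s ^+ m = b.
  have : s ^+ m.-1 * (x i + y i) = 2 * b by rewrite mulrDr (mulrC _ (x i)) (mulrC _ (y i)) e5.
  by rewrite hxy smS => h; lra.
by move/eqP: abm; apply; rewrite -sk -sm -!exprM mulnC.
Qed.

Lemma L_k1 : k = 1%N -> forall i j, y i != y j ->
  exists P, [/\ (0 < P)%N, (P < m.-1)%N &
    exists z, root (Gp a b m P) z /\ y i = fP a m P z].
Proof.
move=> k1' i j yij.
have m1 : (1 < m)%N by rewrite -k1'.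
have cm1 : forall K : {set 'I_n}, #|K| = m.-1 -> #|K|.+1 = m.
  by move=> K ->; rewrite prednK // ltnW.
have hxy : forall l, x l + y l = 2 * a.
  by move=> l; have := hI (etrans (cards1 l) (esym k1')); rewrite /prodI !big_set1.
have ex : forall l, x l = 2 * a - y l by move=> l; rewrite -(hxy l) addrK.
have stepA : forall i j (L : {set 'I_n}), y i != y j -> i \notin L -> j \notin L ->
    #|L| = m.-1 -> prodI x L = b / a /\ prodI y L = b / a.
  move=> i' j' L yij' iL jL cL.
  have ei := hJK iL (cm1 L cL); have ej := hJK jL (cm1 L cL).
  rewrite ex in ei; rewrite ex in ej.
  have h : (y i' - y j') * (prodI y L - prodI x L) = 0 by lra.
  move: h => /eqP; rewrite mulf_eq0 subr_eq0 (negbTE yij') /= subr_eq0 => /eqP yx.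
  have xL : prodI x L = b / a.
    rewrite -yx in ei *; apply: (mulIf (lt0r_neq0 a0)); rewrite divfK ?gt_eqF //.
    lra.
  by rewrite yx xL.
have ij : i != j by apply: contraNneq yij => ->.
have [L [LO cL]] := exL ij.
have iL : i \notin L by apply: (notin_sub LO); rewrite !inE eqxx.
have jL : j \notin L by apply: (notin_sub LO); rewrite !inE eqxx orbT.
have [xL yL] := stepA i j L yij iL jL cL.
have ba0 : b / a != 0 by rewrite mulf_neq0 ?invr_eq0 ?gt_eqF.
have stepB : forall l, l \in L -> y l != y i -> y l = y j.
  move=> l lL yli.
  have lj : l != j by apply: contraNneq jL => <-.
  have iLl : i \notin j |: (L :\ l).
    by rewrite !inE negb_or ij /= negb_and (negbTE iL) orbT.
  have lLl : l \notin j |: (L :\ l) by rewrite !inE negb_or lj /= eqxx.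
  have jLl : j \notin L :\ l by rewrite !inE negb_and (negbTE jL) orbT.
  have lLl' : l \notin L :\ l by rewrite !inE eqxx.
  have cL' : #|j |: (L :\ l)| = m.-1.
    by rewrite cardsU1 jLl -cL (cardsD1 l L) lL.
  have yil : y i != y l by rewrite eq_sym.
  have [xL' _] := stepA i l _ yil iLl lLl cL'.
  rewrite prodIU1 // in xL'.
  rewrite -(setD1K lL) prodIU1 // in xL.
  have p0 : prodI x (L :\ l) != 0.
    by apply: contraNneq ba0 => h; rewrite -xL h mulr0.
  have xjl : x j = x l by apply: (mulIf p0); rewrite xL xL'.
  by move: xjl; rewrite !ex => h; lra.
set A := L :&: [set l | y l == y i].
set B := L :\: [set l | y l == y i].
have cAB : (#|A| + #|B|)%N = m.-1 by rewrite cardsID.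
have eB : #|B| = (m.-1 - #|A|)%N by rewrite -cAB addKn.
have splitL : forall g : 'I_n -> R, prodI g L = prodI g A * prodI g B.
  by move=> g; rewrite /prodI (@big_setID _ _ _ _ L [set l | y l == y i]).
have yA : forall l, l \in A -> y l = y i by move=> l; rewrite !inE => /andP [_ /eqP].
have yB : forall l, l \in B -> y l = y j.
  by move=> l; rewrite !inE => /andP [/eqP yl lL]; apply: stepB => //; apply/eqP.
have hu : x i ^+ #|A| * x j ^+ (m.-1 - #|A|) = b / a.
  rewrite -xL splitL -eB (prodI_const (g := x) (s := x i)) ?(prodI_const (g := x) (s := x j)) //.
    by move=> l /yB; rewrite !ex => ->.
  by move=> l /yA; rewrite !ex => ->.
have hv : y i ^+ #|A| * y j ^+ (m.-1 - #|A|) = b / a.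
  rewrite -yL splitL -eB (prodI_const (g := y) (s := y i)) ?(prodI_const (g := y) (s := y j)) //.
have abm1 : a ^+ m != b by move: abm; rewrite k1' expr1.
have PA : (#|A| <= m.-1)%N by rewrite -cAB leq_addr.
have [P0 Pm [z [rz ez]]] := stepd a0 b0 abm1 m1 (hx i) (hy i) (hx j) (hy j) (hxy i) (hxy j) PA hu hv.
by exists #|A|; split => //; exists z.
Qed.

End Main.

Unset Implicit Arguments. Set Strict Implicit.

Theorem lemma4p2 (R : realType) (a b : R) (k m : nat) :
  0 < a -> 0 < b -> (1 <= k)%N -> (k < m)%N -> a ^+ m != b ^+ k ->
  exists F : seq R,
    forall (n : nat), (m <= n.-1)%N ->
    forall x y : 'I_n -> R,
      (forall i, 0 <= x i) -> (forall i, 0 < y i) ->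
      (forall I : {set 'I_n}, #|I| = k -> prodI x I + prodI y I = 2 * a) ->
      (forall J : {set 'I_n}, #|J| = m -> prodI x J + prodI y J = 2 * b) ->
      forall i, y i \in F.
Proof.
move=> a0 b0 k1 km abm.
have [F1 hF1] := roots_fin (Rpoly_neq0 b a0 k1 km).
have [F3 hF3] : exists F3 : seq R, forall P v, (P < m.-1)%N ->
    ((0 < P)%N /\ exists z, root (Gp a b m P) z /\ v = fP a m P z) -> v \in F3.
  apply: fin_union => P Pm.
  have [->|P0] := posnP P.
    by exists [::] => v [].
  have [s hs] := roots_fin (Gp_neq0 a0 b0 P0 Pm).
  exists (map (fP a m P) s) => v [_ [z [rz ->]]].
  by apply: map_f; apply: hs.
exists (F1 ++ F3) => n hn x y hx hy hI hJ i.
rewrite mem_cat.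
case: (classic (forall j, y j = y i)) => [hc|].
  by rewrite (hF1 _ (L_const a0 b0 k1 km abm hn hI hJ hc)).
move/not_all_ex_not => [j /eqP hj].
have hij : y i != y j by rewrite eq_sym.
have [k1'|k2] := eqVneq k 1%N.
  have [P [P0 Pm [z [rz ez]]]] := L_k1 a0 b0 k1 km abm hn hx hy hI hJ k1' hij.
  by apply/orP; right; apply: (hF3 P) => //; split => //; exists z.
exfalso; apply: (L_k2 a0 b0 k1 km abm hn hx hy hI hJ _ hij).
by rewrite ltn_neqAle eq_sym k2 k1.
Qed.
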